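(* For every $n\ge0$, the map $\preceq\mapsto M_\preceq$ is a bijection from the set of $\{\mathbf{3},\mathbf{2}+\mathbf{2}\}$-free naturally labelled posets on $[n]$ onto the set of upper-triangular $n\times n$ binary matrices $M$ that satisfy the following conditions. (i) $M(i,i)=1$ for all $i$. (ii) (no $M_0$) There are no $i<j<k$ with $M(i,j)=M(j,k)=1$. (iii) (no $M_1$) There are no $a<b<c<d$ with $M(a,b)=1$, $M(a,c)=0$, $M(a,d)=0$, $M(b,c)=0$, $M(b,d)=0$, $M(c,d)=1$. (iv) (no $M_2$) There are no $a<b<c<d$ with $M(a,b)=0$, $M(a,c)=1$, $M(a,d)=0$, $M(b,c)=0$, $M(b,d)=1$, $M(c,d)=0$. (v) (no $M_3$) There are no $a<b<c<d$ with $M(a,b)=0$, $M(a,c)=0$, $M(a,d)=1$, $M(b,c)=1$, $M(b,d)=0$, $M(c,d)=0$. In conditions (iii)–(v) the entry $M(a,a)$ is unrestricted. Conditions (ii)–(v) say that $M$ avoids the partial submatrices $M_0=\begin{pmatrix}1&\ast\\1&1\end{pmatrix}$ on rows $i<j$ and columns $j<k$, and $M_1=\begin{pmatrix}1&0&0\\1&0&0\\\ast&1&1\end{pmatrix}$, $M_2=\begin{pmatrix}0&1&0\\1&0&1\\\ast&1&0\end{pmatrix}$, $M_3=\begin{pmatrix}0&0&1\\1&1&0\\\ast&1&0\end{pmatrix}$ on rows $a<b<c$ and columns $b<c<d$, where $\ast$ marks an unconstrained entry. In each case the lower-left specified entries lie on the main diagonal.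
   Context: A partial order $\preceq$ on $[n]$ is naturally labelled if $x\prec y$ implies $x<y$. It is $\mathbf{3}$-free if there are no $x\prec y\prec z$. It is $(\mathbf{2}+\mathbf{2})$-free if there are no four distinct elements $i\prec j$, $k\prec \ell$ with each of $i,j$ incomparable to each of $k,\ell$. It is $\{\mathbf{3},\mathbf{2}+\mathbf{2}\}$-free if it is both. The incidence matrix $M_\preceq$ has $M_\preceq(i,j)=1$ if and only if $i\preceq j$. *)

(* Defs.v *)
From mathcomp Require Import all_boot all_algebra.
Set Implicit Arguments. Unset Strict Implicit. Unset Printing Implicit Defensive.

Definition is_poset (n : nat) (R : rel 'I_n) : Prop :=
  [/\ (forall x, R x x),
      (forall x y, R x y -> R y x -> x = y) &
      (forall x y z, R x y -> R y z -> R x z)].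

Definition sprec (n : nat) (R : rel 'I_n) (x y : 'I_n) : bool := R x y && (x != y).

Definition naturally_labelled (n : nat) (R : rel 'I_n) : Prop :=
  forall x y : 'I_n, sprec R x y -> (x < y)%N.

Definition three_free (n : nat) (R : rel 'I_n) : Prop :=
  ~ exists x y z : 'I_n, sprec R x y /\ sprec R y z.

Definition incomparable (n : nat) (R : rel 'I_n) (x y : 'I_n) : bool :=
  ~~ R x y && ~~ R y x.

Definition two_plus_two_free (n : nat) (R : rel 'I_n) : Prop :=
  ~ exists i j k l : 'I_n,
      [/\ uniq [:: i; j; k; l], sprec R i j, sprec R k l &
          [/\ incomparable R i k, incomparable R i l,
              incomparable R j k & incomparable R j l]].

Definition good_poset (n : nat) (R : rel 'I_n) : Prop :=
  [/\ is_poset R, naturally_labelled R, three_free R & two_plus_two_free R].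

(* incidence matrix: M(i,j) = 1 iff i ⪯ j; binary matrices are 'M[bool]_n
   with true = 1, false = 0 *)
Definition incidence (n : nat) (R : rel 'I_n) : 'M[bool]_n :=
  \matrix_(i, j) R i j.

Definition upper_triangular (n : nat) (M : 'M[bool]_n) : Prop :=
  forall i j : 'I_n, (j < i)%N -> M i j = false.

Definition good_matrix (n : nat) (M : 'M[bool]_n) : Prop :=
  [/\ upper_triangular M,
      (forall i, M i i = true),
      (forall i j k : 'I_n, (i < j)%N -> (j < k)%N -> ~ (M i j /\ M j k)),
      (forall a b c d : 'I_n, (a < b)%N -> (b < c)%N -> (c < d)%N ->
         ~ [/\ M a b, ~~ M a c, ~~ M a d & [/\ ~~ M b c, ~~ M b d & M c d]]) &
      [/\
      (forall a b c d : 'I_n, (a < b)%N -> (b < c)%N -> (c < d)%N ->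
         ~ [/\ ~~ M a b, M a c, ~~ M a d & [/\ ~~ M b c, M b d & ~~ M c d]]) &
      (forall a b c d : 'I_n, (a < b)%N -> (b < c)%N -> (c < d)%N ->
         ~ [/\ ~~ M a b, ~~ M a c, M a d & [/\ M b c, ~~ M b d & ~~ M c d]])]].

(* Main.v *)
Require Import Defs.
From mathcomp Require Import all_boot all_algebra.
From mathcomp Require Import zify.
Set Implicit Arguments. Unset Strict Implicit.

Lemma ordeq n (i j : 'I_n) : (i == j) = ((i:nat) == j).
Proof. by []. Qed.

Lemma nat_le n (R : rel 'I_n) : naturally_labelled R ->
  forall x y, R x y -> (x <= y)%N.
Proof.
move=> H x y Rxy; case: (eqVneq x y) => [->//|ne].
by apply: ltnW; apply: H; rewrite /sprec Rxy ne.
Qed.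

Lemma nat_lt n (R : rel 'I_n) : naturally_labelled R ->
  forall x y : 'I_n, (y < x)%N -> R x y = false.
Proof.
move=> H x y lt; apply/negbTE/negP => Rxy; have := nat_le H Rxy; lia.
Qed.

Lemma sprec_lt n (R : rel 'I_n) (x y : 'I_n) : (x < y)%N -> R x y -> sprec R x y.
Proof. by move=> lt Rxy; rewrite /sprec Rxy ordeq; apply/eqP; lia. Qed.

Lemma part1 n (R : rel 'I_n) : good_poset R -> good_matrix (incidence R).
Proof.
case=> [[refl anti trans] nat three tpt].
split.
- by move=> i j lt; rewrite mxE (nat_lt nat).
- by move=> i; rewrite mxE refl.
- move=> i j k ij jk; rewrite !mxE => -[Rij Rjk]; apply: three.
  by exists i, j, k; split; apply: sprec_lt.
- move=> a b c d ab bc cd; rewrite !mxE => -[Rab Rac Rad [Rbc Rbd Rcd]].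
  apply: tpt; exists a, b, c, d; split.
  + rewrite /= !inE !ordeq; apply/and4P; split; try (apply/and3P; split);
     try (apply/andP; split); try (apply/eqP; lia); by [].
  + by apply: sprec_lt => //; lia.
  + by apply: sprec_lt => //; lia.
  + split; rewrite /incomparable ?Rac ?Rad ?Rbc ?Rbd (nat_lt nat) //; lia.
- split.
  + move=> a b c d ab bc cd; rewrite !mxE => -[Rab Rac Rad [Rbc Rbd Rcd]].
    apply: tpt; exists a, c, b, d; split.
    * rewrite /= !inE !ordeq; apply/and4P; split; try (apply/and3P; split);
       try (apply/andP; split); try (apply/eqP; lia); by [].
    * by apply: sprec_lt => //; lia.
    * by apply: sprec_lt => //; lia.
    * split; rewrite /incomparable ?Rab ?Rad ?Rbc ?Rcd (nat_lt nat) //; lia.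
  + move=> a b c d ab bc cd; rewrite !mxE => -[Rab Rac Rad [Rbc Rbd Rcd]].
    apply: tpt; exists a, d, b, c; split.
    * rewrite /= !inE !ordeq; apply/and4P; split; try (apply/and3P; split);
       try (apply/andP; split); try (apply/eqP; lia); by [].
    * by apply: sprec_lt => //; lia.
    * by apply: sprec_lt => //; lia.
    * split; rewrite /incomparable ?Rab ?Rac ?Rbd ?Rcd (nat_lt nat) //; lia.
Qed.

Lemma ut_le n (M : 'M[bool]_n) : upper_triangular M -> forall x y : 'I_n, M x y -> (x <= y)%N.
Proof.
move=> U x y Mxy; case: (leqP x y) => // lt; by rewrite U in Mxy.
Qed.

Lemma ut_lt n (M : 'M[bool]_n) : upper_triangular M -> forall x y : 'I_n, M x y -> x != y -> (x < y)%N.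
Proof.
move=> U x y Mxy ne; have := ut_le U Mxy; move: ne; rewrite ordeq => /eqP; lia.
Qed.

Lemma key n (M : 'M[bool]_n) : good_matrix M ->
  forall i j k l : 'I_n, (i < j)%N -> (k < l)%N -> (i < k)%N -> (j:nat) <> k -> (j:nat) <> l ->
  M i j -> M k l -> ~~ M i k -> ~~ M i l -> ~~ M j k -> ~~ M j l ->
  ~~ M k j -> ~~ M l j -> False.
Proof.
case=> U D M0 M1 [M2 M3] i j k l ij kl ik jk jl Mij Mkl Mik Mil Mjk Mjl Mkj Mlj.
case: (ltnP j k) => jk'.
  by apply: (M1 i j k l) => //; split.
case: (ltnP j l) => jl'.
  apply: (M2 i k j l) => //; try lia; by split.
apply: (M3 i k l j) => //; try lia; by split.
Qed.

Theorem proposition6 (n : nat) :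
  [/\ (forall R : rel 'I_n, good_poset R -> good_matrix (incidence R)),
      (forall R1 R2 : rel 'I_n, good_poset R1 -> good_poset R2 ->
         incidence R1 = incidence R2 -> R1 =2 R2) &
      (forall M : 'M[bool]_n, good_matrix M ->
         exists2 R : rel 'I_n, good_poset R & incidence R = M)].
Proof.
split.
- exact: part1.
- by move=> R1 R2 _ _ E x y; move/matrixP: E => /(_ x y); rewrite !mxE.
- move=> M G; exists (fun x y => M x y); last by apply/matrixP => x y; rewrite mxE.
  have G' := G; case: G' => [U D M0 M1 [M2 M3]].
  have spl : forall x y : 'I_n, sprec (fun x y => M x y) x y -> (x < y)%N.
    by move=> x y /andP [Mxy ne]; exact: (ut_lt U).
  split.
  + split.
    * exact: D.
    * move=> x y Mxy Myx; apply/eqP; rewrite ordeq eqn_leq.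
      by rewrite (ut_le U Mxy) (ut_le U Myx).
    * move=> x y z Mxy Myz.
      case: (eqVneq x y) => [->//|nxy]; case: (eqVneq y z) => [<-//|nyz].
      exfalso; apply: (M0 x y z); [exact: (ut_lt U)|exact: (ut_lt U)|by split].
  + exact: spl.
  + move=> [x [y [z [sxy syz]]]]; apply: (M0 x y z); [exact: spl|exact: spl|].
    by move: sxy syz => /andP[-> _] /andP[-> _].
  + move=> [i [j [k [l [un sij skl [Iik Iil Ijk Ijl]]]]]].
    move: un; rewrite /= !inE !ordeq => un.
    have ij := spl _ _ sij; have kl := spl _ _ skl.
    move: sij skl => /andP[Mij _] /andP[Mkl _].
    move: Iik Iil Ijk Ijl => /andP[a1 a2] /andP[b1 b2] /andP[c1 c2] /andP[d1 d2].
    case: (ltnP i k) => ik.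
      apply: (key G ij kl ik) => //; lia.
    have ki : (k < i)%N by lia.
    apply: (key G kl ij ki) => //; lia.
Qed.
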